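(* Let $\mathcal{X}$ be finite, $\mathcal{C}\subseteq\{\pm1\}^{\mathcal{X}}$ a concept class, and $\alpha\in(0,1)$. Suppose $\{\lambda_c\}_{c\in\mathcal{C}}$ and $\{\mu_c\}_{c\in\mathcal{C}}$ are families of distributions on $\mathcal{Z}=\mathcal{X}\times\{\pm1\}$ and $\pi$ is a distribution on $\mathcal{C}$ such that $$\Delta:=\mathbb{E}_{c\sim\pi}[L_{\lambda_c}(c)]>\frac{2\alpha}{1+\alpha},$$ and $L_{\mu_c}(c)=0$ for all $c\in\mathcal{C}$. Let $U\in\mathbb{R}^{\mathcal{C}\times\mathcal{Z}}$ have entries $u_{c,z}=\pi(c)(\lambda_c(z)-\mu_c(z))$. Then there exist families $\{\widetilde\lambda_c\}_{c\in\mathcal{C}}$, $\{\widetilde\mu_c\}_{c\in\mathcal{C}}$ of distributions on $\mathcal{Z}$ and a distribution $\widetilde\pi$ on $\mathcal{C}$ such that: 1. for all $c$ in the support of $\widetilde\pi$, $L_{\widetilde\lambda_c}(c)\ge \frac{C_0\,\alpha/(1+\alpha)}{\log((1+\alpha)/\alpha)}$, where $C_0>0$ is an absolute constant; 2. $L_{\widetilde\mu_c}(c)=0$ for all $c\in\mathcal{C}$; 3. the matrix $\widetilde U\in\mathbb{R}^{\mathcal{C}\times\mathcal{Z}}$ with entries $\widetilde u_{c,z}=\widetilde\pi(c)(\widetilde\lambda_c(z)-\widetilde\mu_c(z))$ satisfies $\gamma_2^*(\widetilde U)\le\frac{2\alpha\,\gamma_2^*(U)}{(1+\alpha)\Delt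a}$.
   Context: $L_{\mathcal{D}}(h)=\Pr_{(x,y)\sim\mathcal{D}}[h(x)\ne y]$. $\gamma_2(M)=\min\{\|R\|_{2\to\infty}\|A\|_{1\to2}:RA=M\}$ (max Euclidean row norm times max Euclidean column norm); $\gamma_2^*(N)=\max\{\sum_{i,j}m_{ij}n_{ij}:\gamma_2(M)\le1\}$ is its dual norm. *)

(* Defs.v *)
From mathcomp Require Import all_boot all_order all_algebra.
From mathcomp Require Import classical_sets reals exp.
Set Implicit Arguments. Unset Strict Implicit. Unset Printing Implicit Defensive.
Import Order.TTheory GRing.Theory Num.Theory.
Local Open Scope ring_scope.
Local Open Scope classical_set_scope.

(* Labels {+1,-1} are encoded by bool (true = +1, false = -1). *)
Definition is_distr (R : realType) (T : finType) (f : {ffun T -> R}) : Prop :=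
  (forall t, 0 <= f t) /\ \sum_(t : T) f t = 1.

Definition loss (R : realType) (X : finType) (D : {ffun (X * bool) -> R})
  (h : {ffun X -> bool}) : R :=
  \sum_(z : X * bool | h z.1 != z.2) D z.

Definition max_row_norm (R : realType) (I : finType) (k : nat)
  (Rm : I -> 'I_k -> R) : R :=
  \big[Num.max/0]_(i : I) Num.sqrt (\sum_(l < k) Rm i l ^+ 2).
Definition max_col_norm (R : realType) (J : finType) (k : nat)
  (Am : 'I_k -> J -> R) : R :=
  \big[Num.max/0]_(j : J) Num.sqrt (\sum_(l < k) Am l j ^+ 2).

(* gamma_2(M) = min { ||R||_{2->oo} ||A||_{1->2} : R A = M }, inner
   dimension arbitrary. *)
Definition gamma2 (R : realType) (I J : finType) (M : I -> J -> R) : R :=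
  inf [set v : R | exists (k : nat) (Rm : I -> 'I_k -> R) (Am : 'I_k -> J -> R),
         (forall i j, \sum_(l < k) Rm i l * Am l j = M i j) /\
         v = max_row_norm Rm * max_col_norm Am].

Definition gamma2_dual (R : realType) (I J : finType) (N : I -> J -> R) : R :=
  sup [set v : R | exists M : I -> J -> R, gamma2 M <= 1 /\
         v = \sum_(i : I) \sum_(j : J) M i j * N i j].

Definition Umat (R : realType) (X C : finType) (pi : {ffun C -> R})
  (lam mu : C -> {ffun (X * bool) -> R}) : C -> (X * bool) -> R :=
  fun c z => pi c * (lam c z - mu c z).

(* Main.v *)
Require Import Defs.
From mathcomp Require Import all_boot all_order all_algebra.
From mathcomp Require Import classical_sets reals exp boolp.
From mathcomp Require Import ring lra.
Set Implicit Arguments. Unset Strict Implicit. Unset Printing Implicit Defensive.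
Import Order.TTheory GRing.Theory Num.Theory.
Local Open Scope ring_scope.
Local Open Scope classical_set_scope.


Lemma cs_abs (R : realType) (k : nat) (x y : 'I_k -> R) :
  \sum_(l < k) `|x l| * `|y l| <=
    Num.sqrt (\sum_(l < k) x l ^+ 2) * Num.sqrt (\sum_(l < k) y l ^+ 2).
Proof.
set p := Num.sqrt _; set q := Num.sqrt _.
have hp : 0 <= \sum_(l < k) x l ^+ 2 by apply: sumr_ge0 => l _; exact: sqr_ge0.
have hq : 0 <= \sum_(l < k) y l ^+ 2 by apply: sumr_ge0 => l _; exact: sqr_ge0.
have p0 : 0 <= p by exact: sqrtr_ge0.
have q0 : 0 <= q by exact: sqrtr_ge0.
have [pz|pnz] := eqVneq p 0.
  have : \sum_(l < k) x l ^+ 2 = 0 by rewrite -(sqr_sqrtr hp) -/p pz expr0n.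
  move/psumr_eq0P => H.
  rewrite pz mul0r big1 // => l _.
  have := H (fun l _ => sqr_ge0 _) l isT => /eqP; rewrite sqrf_eq0 => /eqP ->.
  by rewrite normr0 mul0r.
have [qz|qnz] := eqVneq q 0.
  have : \sum_(l < k) y l ^+ 2 = 0 by rewrite -(sqr_sqrtr hq) -/q qz expr0n.
  move/psumr_eq0P => H.
  rewrite qz mulr0 big1 // => l _.
  have := H (fun l _ => sqr_ge0 _) l isT => /eqP; rewrite sqrf_eq0 => /eqP ->.
  by rewrite normr0 mulr0.
have pp : 0 < p by rewrite lt_def pnz.
have qp : 0 < q by rewrite lt_def qnz.
have key : (2 * p * q) * \sum_(l < k) `|x l| * `|y l| <=
     q ^+ 2 * \sum_(l < k) x l ^+ 2 + p ^+ 2 * \sum_(l < k) y l ^+ 2.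
  rewrite !mulr_sumr -big_split /=; apply: ler_sum => l _.
  have := sqr_ge0 (q * `|x l| - p * `|y l|).
  rewrite -[x l ^+ 2]real_normK ?num_real // -[y l ^+ 2]real_normK ?num_real //.
  move=> h; nra.
move: key; rewrite sqr_sqrtr // sqr_sqrtr // -/p -/q.
rewrite [X in _ <= X -> _](_ : _ = (2 * p * q) * (p * q)); last first.
  by rewrite -(sqr_sqrtr hp) -(sqr_sqrtr hq) -/p -/q; ring.
move=> h; rewrite -(ler_pM2l (_ : 0 < 2 * p * q)) //.
by rewrite !mulr_gt0.
Qed.

Lemma bigmax_ge0 (R : realType) (I : finType) (F : I -> R) (P : pred I) :
  0 <= \big[Num.max/0]_(i | P i) F i.
Proof.
exact: bigmax_ge_id.
Qed.

Lemma le_bigmaxR (R : realType) (I : finType) (F : I -> R) j :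
  F j <= \big[Num.max/0]_(i : I) F i.
Proof. exact: le_bigmax. Qed.

Definition gset (R : realType) (I J : finType) (M : I -> J -> R) : set R :=
  [set v : R | exists (k : nat) (Rm : I -> 'I_k -> R) (Am : 'I_k -> J -> R),
         (forall i j, \sum_(l < k) Rm i l * Am l j = M i j) /\
         v = max_row_norm Rm * max_col_norm Am].

Lemma gamma2E (R : realType) (I J : finType) (M : I -> J -> R) : gamma2 M = inf (gset M).
Proof. by []. Qed.

Lemma gset_ge0 (R : realType) (I J : finType) (M : I -> J -> R) : lbound (gset M) 0.
Proof.
move=> v [k [Rm [Am [_ ->]]]].
by apply: mulr_ge0; apply: bigmax_ge0.
Qed.

Lemma gset_ne (R : realType) (I J : finType) (M : I -> J -> R) : gset M !=set0.
Proof.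
exists (max_row_norm (fun i (l : 'I_#|J|) => M i (enum_val l)) *
        max_col_norm (fun (l : 'I_#|J|) j => ((enum_val l == j)%:R : R))).
do 3 eexists; split; last reflexivity.
move=> i j; rewrite (bigD1 (enum_rank j)) //= enum_rankK eqxx mulr1.
rewrite big1 ?addr0 // => l hl.
case: eqP => [e|]; last by rewrite mulr0.
by move: hl; rewrite -e enum_valK eqxx.
Qed.

Lemma entry_le_gamma2 (R : realType) (I J : finType) (M : I -> J -> R) i j :
  `|M i j| <= gamma2 M.
Proof.
apply: lb_le_inf; first exact: gset_ne.
move=> v [k [Rm [Am [HM ->]]]].
rewrite -HM; apply: le_trans (ler_norm_sum _ _ _) _.
under eq_bigr do rewrite normrM.
apply: le_trans (cs_abs (Rm i) (Am^~ j)) _.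
apply: ler_pM; try exact: sqrtr_ge0.
  exact: (le_bigmaxR (fun i => Num.sqrt (\sum_(l < k) Rm i l ^+ 2))).
exact: (le_bigmaxR (fun j => Num.sqrt (\sum_(l < k) Am l j ^+ 2))).
Qed.

Lemma gamma2_scale (R : realType) (I J : finType) (M : I -> J -> R) (e : I -> R) :
  (forall i, 0 <= e i <= 1) -> gamma2 (fun i j => e i * M i j) <= gamma2 M.
Proof.
move=> he; apply: lb_le_inf; first exact: gset_ne.
move=> v [k [Rm [Am [HM ->]]]].
apply: (@le_trans _ _ (max_row_norm (fun i l => e i * Rm i l) * max_col_norm Am)).
  apply: ge_inf; first by exists 0; exact: gset_ge0.
  do 3 eexists; split; last reflexivity.
  by move=> i j; rewrite -HM mulr_sumr; apply: eq_bigr => l _; rewrite mulrA.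
apply: ler_wpM2r; first exact: bigmax_ge0.
apply: bigmax_le => [|i _]; first exact: bigmax_ge0.
apply: le_trans (le_bigmaxR (fun i => Num.sqrt (\sum_(l < k) Rm i l ^+ 2)) i).
have h0 : 0 <= \sum_(l < k) Rm i l ^+ 2 by apply: sumr_ge0 => l _; exact: sqr_ge0.
rewrite ler_sqrt //.
under eq_bigr do rewrite exprMn.
rewrite -mulr_sumr.
have := he i => /andP [h1 h2].
have : e i ^+ 2 <= 1 by nra.
move=> h3; nra.
Qed.

Lemma gamma2_0 (R : realType) (I J : finType) : gamma2 (fun (_ : I) (_ : J) => 0 : R) <= 1.
Proof.
apply: (@le_trans _ _ 0) => //.
apply: ge_inf; first by exists 0; exact: gset_ge0.
exists 0%N, (fun _ _ => 0), (fun _ _ => 0); split.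
  by move=> i j; rewrite big_ord0.
by rewrite /max_row_norm /max_col_norm; under eq_bigr do rewrite big_ord0 sqrtr0;
  rewrite big1_idem ?mul0r //= maxxx.
Qed.

Definition dset (R : realType) (I J : finType) (N : I -> J -> R) : set R :=
  [set v : R | exists M : I -> J -> R, gamma2 M <= 1 /\
         v = \sum_(i : I) \sum_(j : J) M i j * N i j].

Lemma dset_ne (R : realType) (I J : finType) (N : I -> J -> R) : dset N !=set0.
Proof.
exists 0, (fun _ _ => 0); split; first exact: gamma2_0.
by rewrite big1 // => i _; rewrite big1 // => j _; rewrite mul0r.
Qed.

Lemma dset_sup (R : realType) (I J : finType) (N : I -> J -> R) : has_sup (dset N).
Proof.
split; first exact: dset_ne.
exists (\sum_(i : I) \sum_(j : J) `|N i j|) => v [M [HM ->]].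
apply: ler_sum => i _; apply: ler_sum => j _.
apply: le_trans (real_ler_norm _) _; first exact: num_real.
rewrite normrM; rewrite -{2}[`|N i j|]mul1r; apply: ler_wpM2r => //.
exact: le_trans (entry_le_gamma2 M i j) HM.
Qed.

Lemma dual_ge0 (R : realType) (I J : finType) (N : I -> J -> R) : 0 <= gamma2_dual N.
Proof.
apply: (sup_upper_bound (dset_sup N)).
exists (fun _ _ => 0); split; first exact: gamma2_0.
by rewrite big1 // => i _; rewrite big1 // => j _; rewrite mul0r.
Qed.

Lemma dual_scale (R : realType) (I J : finType) (N : I -> J -> R) (d : I -> R) (del : R) :
  0 < del -> (forall i, 0 <= d i <= del) ->
  gamma2_dual (fun i j => d i * N i j) <= del * gamma2_dual N.
Proof.
move=> hdel hd; apply: ge_sup; first exact: dset_ne.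
move=> v [M [HM ->]].
have -> : \sum_(i : I) \sum_(j : J) M i j * (d i * N i j) =
   del * \sum_(i : I) \sum_(j : J) (d i / del * M i j) * N i j.
  rewrite mulr_sumr; apply: eq_bigr => i _; rewrite mulr_sumr.
  apply: eq_bigr => j _; field; lra.
rewrite ler_pM2l //; apply: (sup_upper_bound (dset_sup N)).
eexists; split; last reflexivity.
apply: le_trans HM; apply: gamma2_scale => i.
have := hd i => /andP [h1 h2].
by rewrite divr_ge0 ?ler_pdivrMr ?mul1r // ltW.
Qed.

Theorem lemma4p4 (R : realType) :
  exists C0 : R, 0 < C0 /\
  forall (X C : finType) (cl : C -> {ffun X -> bool}), injective cl ->
  forall alpha : R, 0 < alpha < 1 ->
  forall (lam mu : C -> {ffun (X * bool) -> R}) (pi : {ffun C -> R}),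
    (forall c, is_distr (lam c)) -> (forall c, is_distr (mu c)) -> is_distr pi ->
    let Delta := \sum_(c : C) pi c * loss (lam c) (cl c) in
    2 * alpha / (1 + alpha) < Delta ->
    (forall c, loss (mu c) (cl c) = 0) ->
    exists (lam' mu' : C -> {ffun (X * bool) -> R}) (pi' : {ffun C -> R}),
      (forall c, is_distr (lam' c)) /\ (forall c, is_distr (mu' c)) /\ is_distr pi' /\
          (forall c, pi' c != 0 ->
             C0 * (alpha / (1 + alpha)) / ln ((1 + alpha) / alpha)
               <= loss (lam' c) (cl c)) /\
          (forall c, loss (mu' c) (cl c) = 0) /\
          gamma2_dual (Umat pi' lam' mu')
            <= 2 * alpha * gamma2_dual (Umat pi lam mu) / ((1 + alpha) * Delta).
Proof.
exists (1/2); split; first by rewrite divr_gt0.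
move=> X C cl _ alpha /andP[a0 a1] lam mu pi hlam hmu hpi Delta hD hmu0.
set a := alpha / (1 + alpha).
have ha0 : 0 < a by rewrite divr_gt0 // addr_gt0.
have ha1 : a <= 1/2.
  by rewrite /a ler_pdivrMr ?addr_gt0 //; lra.
have eq2a : 2 * alpha / (1 + alpha) = 2 * a by rewrite /a mulrA.
rewrite eq2a in hD.
set L := ln ((1 + alpha) / alpha).
have hL : 1/2 <= L.
  have -> : L = - ln a.
    by rewrite /L -invf_div -/a lnV // posrE.
  have : ln a <= a - 1.
    have := @le_ln1Dx R (a - 1); rewrite addrCA subrr addr0; apply; lra.
  lra.
set T := 1 / 2 * a / L.
have L0 : 0 < L by lra.
have T0 : 0 < T by rewrite /T; apply: divr_gt0 => //; apply: mulr_gt0 => //; lra.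
have Ta : T <= a.
  rewrite /T ler_pdivrMr //; nra.
pose l := fun c => loss (lam c) (cl c).
have l0 : forall c, 0 <= l c.
  by move=> c; rewrite /l /loss; apply: sumr_ge0 => z _; case: (hlam c) => h _; exact: h.
have hpi0 : forall c, 0 <= pi c by case: hpi.
pose W := \sum_(c | T <= l c) pi c * l c.
have hDW : Delta <= W + T.
  rewrite /Delta -/l (bigID (fun c => T <= l c)) /= -/W lerD2l.
  apply: (@le_trans _ _ (\sum_(c | ~~ (T <= l c)) pi c * T)).
    apply: ler_sum => c hc; apply: ler_wpM2l => //.
    by rewrite leNgt negbK in hc; exact: ltW.
  rewrite [X in _ <= X](_ : T = \sum_c pi c * T); last by rewrite -mulr_suml hpi.2 mul1r.
  rewrite [X in _ <= X](bigID (fun c => ~~ (T <= l c))) /= lerDl.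
  by apply: sumr_ge0 => c _; apply: mulr_ge0 => //; exact: ltW.
have W0 : 0 < W by lra.
have key : T * Delta <= 2 * a * W.
  have h1 : 0 <= (a - T) * Delta by apply: mulr_ge0; lra.
  have h2 : 0 <= a * (Delta - 2 * a) by apply: mulr_ge0; lra.
  have h3 : 0 <= (a - T) * a by apply: mulr_ge0; lra.
  have h4 : 0 <= a * (W + T - Delta) by apply: mulr_ge0; lra.
  nra.
pose pi' := [ffun c => if T <= l c then pi c * l c / W else 0].
pose lam' := fun c => [ffun z => if T <= l c then T / l c * lam c z + (1 - T / l c) * mu c z else lam c z].
pose d := fun c => if T <= l c then T / W else 0.
have hU : Umat pi' lam' mu = (fun c z => d c * Umat pi lam mu c z).
  apply/funext => c; apply/funext => z.
  rewrite /Umat /d /pi' /lam' !ffunE; case: ifP => h; last by rewrite !mul0r.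
  have lc0 : l c != 0 by apply/negP => /eqP e; move: h; rewrite e; lra.
  have W0' : W != 0 by rewrite gt_eqF.
  by field; rewrite lc0 W0'.
exists lam', mu, pi'.
split.
  move=> c; rewrite /lam'; case h: (T <= l c); last first.
    by split; [move=> z; rewrite ffunE; case: (hlam c) | under eq_bigr do rewrite ffunE; case: (hlam c)].
  have lc : 0 < l c by lra.
  have r0 : 0 <= T / l c by rewrite divr_ge0 // ltW.
  have r1 : T / l c <= 1 by rewrite ler_pdivrMr // mul1r.
  case: (hlam c) => hl1 hl2; case: (hmu c) => hm1 hm2.
  split.
    move=> z; rewrite ffunE; apply: addr_ge0; apply: mulr_ge0 => //; lra.
  under eq_bigr do rewrite ffunE.
  rewrite big_split /= -!mulr_sumr hl2 hm2; ring.
split; first exact: hmu.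
split.
  split; first by move=> c; rewrite ffunE; case: ifP => // h; rewrite divr_ge0 ?mulr_ge0 // ltW.
  under eq_bigr do rewrite ffunE.
  by rewrite -big_mkcond /= -mulr_suml -/W mulfV // gt_eqF.
split.
  move=> c; rewrite /pi' ffunE; case: ifP => h; last by rewrite eqxx.
  move=> _.
  have lc : 0 < l c by lra.
  rewrite /loss; under eq_bigr do rewrite ffunE h.
  rewrite big_split /= -!mulr_sumr.
  have := hmu0 c; rewrite /loss => ->.
  rewrite -/(loss (lam c) (cl c)) -/(l c) mulr0 addr0 mulfVK ?gt_eqF //.
split; first exact: hmu0.
rewrite hU.
have gU := dual_ge0 (Umat pi lam mu).
have TW0 : 0 < T / W by rewrite divr_gt0.
apply: le_trans (dual_scale _ TW0 _) _.
  by move=> c; rewrite /d; case: ifP => _; rewrite ?lexx ?ltW.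
have -> : 2 * alpha * gamma2_dual (Umat pi lam mu) / ((1 + alpha) * Delta)
   = (2 * a / Delta) * gamma2_dual (Umat pi lam mu).
  rewrite /a; field; apply/andP; split; rewrite gt_eqF //; lra.
apply: ler_wpM2r => //.
rewrite ler_pdivlMr; last lra.
by rewrite mulrAC ler_pdivrMr.

Qed.
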